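(* Let $P\in\mathcal{RP}$ and assume $x_P^+\notin X_P^-$, $x_P^-\notin X_P^+$, $y_P^+\notin Y_P^-$, $y_P^-\notin Y_P^+$. Suppose that for every choice of integers $n_x$ ($x\in X_P\setminus\{0\}$) and $m_y$ ($y\in Y_P\setminus\{0\}$), not all zero, with $n_{x_P^+}\cdot n_{x_P^-}\ge0$ and $m_{y_P^+}\cdot m_{y_P^-}\ge0$ (an index equal to $0$ being omitted), we have $$\sum_{x\in X_P\setminus\{0\}}n_x x-\sum_{y\in Y_P\setminus\{0\}}m_y y\neq0.$$ Then $P$ is not resonant.
   Context: $\mathcal{RP}$ is the family of bounded planar polygons (not necessarily connected or simply connected) whose boundary is a finite union of vertical and horizontal segments. For $P\in\mathcal{RP}$: $X_P^+$ is the set of non-negative first coordinates of vertical sides of $P$; $X_P^-$ is the set of numbers $-x$ where $x<0$ is the first coordinate of a vertical side; $Y_P^+$, $Y_P^-$ are defined analogously from second coordinates of horizontal sides; $X_P=X_P^+\cup X_P^-$, $Y_P=Y_P^+\cup Y_P^-$; $x_P^\pm=\max X_P^\pm$, $y_P^\pm=\max Y_P^\pm$ with the convention $\max\emptyset=0$. The billiard flow on $P$ in directions $\pm\pi/4,\pm3\pi/4$ moves points with unit speed along these diagonal directions and reflects elastically off the sides. $P$ is resonant if this billiard flow has an orbit segment joining two (not necessarily distinct) corners of $P$. *)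

(* Defs.v *)
From Stdlib Require Import Reals Lra List.
Open Scope R_scope.

Definition pt := (R * R)%type.

(* Topology of the plane (sup-norm boxes, same topology as Euclidean). *)
Definition interiorP (P : pt -> Prop) (p : pt) : Prop :=
  exists e, 0 < e /\ forall q : pt,
    Rabs (fst q - fst p) < e -> Rabs (snd q - snd p) < e -> P q.

Definition closureP (P : pt -> Prop) (p : pt) : Prop :=
  forall e, 0 < e -> exists q : pt,
    P q /\ Rabs (fst q - fst p) < e /\ Rabs (snd q - snd p) < e.

Definition boundaryP (P : pt -> Prop) (p : pt) : Prop :=
  closureP P p /\ ~ interiorP P p.

(* The family RP: nonempty finite unions of closed axis-parallel rectangles
   [a,b] x [c,d] with a < b, c < d (= bounded closed rectilinear polygons,
   not necessarily connected or simply connected). *)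
Definition in_rect (r : (R * R) * (R * R)) (p : pt) : Prop :=
  fst (fst r) <= fst p <= snd (fst r) /\ fst (snd r) <= snd p <= snd (snd r).

Definition is_RP (P : pt -> Prop) : Prop :=
  exists rs : list ((R * R) * (R * R)),
    rs <> nil /\
    (forall r, In r rs -> fst (fst r) < snd (fst r) /\ fst (snd r) < snd (snd r)) /\
    (forall p, P p <-> exists r, In r rs /\ in_rect r p).

Definition on_vside (P : pt -> Prop) (p : pt) : Prop :=
  exists c d, c < d /\ c <= snd p <= d /\
    forall t, c <= t <= d -> boundaryP P (fst p, t).

Definition on_hside (P : pt -> Prop) (p : pt) : Prop :=
  exists a b, a < b /\ a <= fst p <= b /\
    forall t, a <= t <= b -> boundaryP P (t, snd p).

Definition vside_x (P : pt -> Prop) (x : R) : Prop :=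
  exists c d, c < d /\ forall t, c <= t <= d -> boundaryP P (x, t).

Definition hside_y (P : pt -> Prop) (y : R) : Prop :=
  exists a b, a < b /\ forall t, a <= t <= b -> boundaryP P (t, y).

Definition XPp P (x : R) : Prop := 0 <= x /\ vside_x P x.
Definition XPm P (x : R) : Prop := exists x', x' < 0 /\ vside_x P x' /\ x = - x'.
Definition YPp P (y : R) : Prop := 0 <= y /\ hside_y P y.
Definition YPm P (y : R) : Prop := exists y', y' < 0 /\ hside_y P y' /\ y = - y'.
Definition XP P (x : R) : Prop := XPp P x \/ XPm P x.
Definition YP P (y : R) : Prop := YPp P y \/ YPm P y.

(* r = max A, with the convention max (empty) = 0. *)
Definition is_max0 (A : R -> Prop) (r : R) : Prop :=
  (A r /\ forall z, A z -> z <= r) \/ ((forall z, ~ A z) /\ r = 0).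

Definition corner (P : pt -> Prop) (p : pt) : Prop :=
  on_vside P p /\ on_hside P p.

(* Resonance: an orbit segment of the diagonal billiard flow joining two
   (not necessarily distinct) corners. *)
Definition resonant (P : pt -> Prop) : Prop :=
  exists (k : nat) (p : nat -> pt) (sx sy : nat -> R),
    (0 < k)%nat /\ corner P (p 0%nat) /\ corner P (p k) /\
    (forall i, (i < k)%nat ->
       (sx i = 1 \/ sx i = -1) /\ (sy i = 1 \/ sy i = -1) /\
       exists t, 0 < t /\
         p (S i) = (fst (p i) + t * sx i, snd (p i) + t * sy i) /\
         forall u, 0 < u < t ->
           interiorP P (fst (p i) + u * sx i, snd (p i) + u * sy i)) /\
    (forall i, (0 < i < k)%nat ->
       boundaryP P (p i) /\ ~ corner P (p i) /\
       (on_vside P (p i) -> sx i = - sx (pred i) /\ sy i = sy (pred i)) /\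
       (on_hside P (p i) -> sy i = - sy (pred i) /\ sx i = sx (pred i))).

Definition zsum (f : R -> Z) (l : list R) : R :=
  fold_right Rplus 0 (map (fun x => IZR (f x) * x) l).

(* Main.v *)
Require Import Defs.
From Stdlib Require Import Reals List Lra Lia ZArith Classical.
Open Scope R_scope.

Lemma Rabs_ge_cases u e : e <= Rabs u -> e <= u \/ e <= - u.
Proof. unfold Rabs; destruct (Rcase_abs u); lra. Qed.

Lemma Rabs_lt u e : Rabs u < e -> - e < u < e.
Proof. unfold Rabs; destruct (Rcase_abs u); lra. Qed.

Lemma Rabs_lt_intro u e : -e < u < e -> Rabs u < e.
Proof. unfold Rabs; destruct (Rcase_abs u); lra. Qed.

Lemma Lmin {A} (l : list A) (f : A -> R) :
  (forall r, In r l -> 0 < f r) -> exists e, 0 < e /\ forall r, In r l -> e <= f r.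
Proof.
  induction l as [|v l IH]; intros H.
  - exists 1; split; [lra| intros r []].
  - destruct IH as [e [He Hl]]. { intros r Hr; apply H; right; auto. }
    exists (Rmin e (f v)); split.
    + apply Rmin_glb_lt; auto. apply H; left; auto.
    + intros r [<-|Hr].
      * apply Rmin_r.
      * eapply Rle_trans; [apply Rmin_l| auto].
Qed.

Lemma Lmax {A} (l : list A) (f : A -> R) (v0 : A) :
  In v0 l -> exists v, In v l /\ forall r, In r l -> f r <= f v.
Proof.
  revert v0; induction l as [|w l IH]; intros v0 H0; [destruct H0|].
  destruct l as [|w' l'].
  - exists w; split; [left; auto|]. intros r [E|[]]; subst; lra.
  - destruct (IH w') as [v [Hv Hm]]; [left; auto|].
    destruct (Rle_dec (f w) (f v)) as [Hle|Hle].
    + exists v; split; [right; auto|]. intros r [E|Hr]; [subst; lra|auto].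
    + exists w; split; [left; auto|]. intros r [E|Hr]; [subst; lra|]. specialize (Hm r Hr); lra.
Qed.

Lemma Rmin4 a b c d : Rmin (Rmin a b) (Rmin c d) <= a /\ Rmin (Rmin a b) (Rmin c d) <= b /\
  Rmin (Rmin a b) (Rmin c d) <= c /\ Rmin (Rmin a b) (Rmin c d) <= d.
Proof. unfold Rmin; repeat destruct Rle_dec; lra. Qed.

Definition sepr (e : R) (p : pt) (r : (R*R)*(R*R)) : Prop :=
  (fst (fst r) <> fst p -> e <= Rabs (fst (fst r) - fst p)) /\
  (snd (fst r) <> fst p -> e <= Rabs (snd (fst r) - fst p)) /\
  (fst (snd r) <> snd p -> e <= Rabs (fst (snd r) - snd p)) /\
  (snd (snd r) <> snd p -> e <= Rabs (snd (snd r) - snd p)).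

Definition gsep (b z : R) : R := if Req_EM_T b z then 1 else Rabs (b - z).

Lemma gsep_pos b z : 0 < gsep b z.
Proof. unfold gsep; destruct (Req_EM_T b z). lra. apply Rabs_pos_lt; intro; apply n; lra. Qed.

Lemma gsep_ne b z : b <> z -> gsep b z = Rabs (b - z).
Proof. intros; unfold gsep; destruct (Req_EM_T b z); [contradiction|reflexivity]. Qed.

Lemma sep_ex (rs : list ((R*R)*(R*R))) (p : pt) :
  exists e, 0 < e /\ forall r, In r rs -> sepr e p r.
Proof.
  destruct (Lmin rs (fun r => Rmin (Rmin (gsep (fst (fst r)) (fst p)) (gsep (snd (fst r)) (fst p)))
     (Rmin (gsep (fst (snd r)) (snd p)) (gsep (snd (snd r)) (snd p))))) as [e [He Hl]].
  { intros r _. repeat apply Rmin_glb_lt; apply gsep_pos. }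
  exists e; split; auto. intros r Hr. specialize (Hl r Hr).
  destruct (Rmin4 (gsep (fst (fst r)) (fst p)) (gsep (snd (fst r)) (fst p))
     (gsep (fst (snd r)) (snd p)) (gsep (snd (snd r)) (snd p))) as [A1 [A2 [A3 A4]]].
  unfold sepr; repeat split; intros Hne; rewrite <- gsep_ne by auto; lra.
Qed.

Definition inbox (e : R) (p q : pt) : Prop :=
  Rabs (fst q - fst p) < e /\ Rabs (snd q - snd p) < e.

Ltac dabs := repeat match goal with
  | H : Rabs _ < _ |- _ => apply Rabs_lt in H
  | H : _ <= Rabs _ |- _ => apply Rabs_ge_cases in H
  end.

Lemma box_rect e p q r : sepr e p r -> inbox e p q -> in_rect r q -> in_rect r p.
Proof.
  destruct r as [[a b] [c d]]; unfold sepr, inbox, in_rect; simpl.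
  intros [Sa [Sb [Sc Sd]]] [Bx By] [[Hq1 Hq2] [Hq3 Hq4]]. dabs.
  split; split.
  - destruct (Rle_dec a (fst p)) as [|n]; [auto|]. exfalso. apply Rnot_le_lt in n.
    destruct (Rabs_ge_cases _ _ (Sa ltac:(intro; lra))); lra.
  - destruct (Rle_dec (fst p) b) as [|n]; [auto|]. exfalso. apply Rnot_le_lt in n.
    destruct (Rabs_ge_cases _ _ (Sb ltac:(intro; lra))); lra.
  - destruct (Rle_dec c (snd p)) as [|n]; [auto|]. exfalso. apply Rnot_le_lt in n.
    destruct (Rabs_ge_cases _ _ (Sc ltac:(intro; lra))); lra.
  - destruct (Rle_dec (snd p) d) as [|n]; [auto|]. exfalso. apply Rnot_le_lt in n.
    destruct (Rabs_ge_cases _ _ (Sd ltac:(intro; lra))); lra.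
Qed.

Lemma rp_closed P rs (HP : forall p, P p <-> exists r, In r rs /\ in_rect r p) p :
  closureP P p -> P p.
Proof.
  intros Hc. destruct (sep_ex rs p) as [e [He Hs]].
  destruct (Hc e He) as [q [Pq [H1 H2]]].
  apply HP in Pq. destruct Pq as [r [Hr Hq]].
  apply HP. exists r; split; auto. eapply box_rect; eauto. split; auto.
Qed.

Definition cone (al be : bool) (r : (R*R)*(R*R)) (p : pt) : Prop :=
  (if al then fst p < snd (fst r) else fst (fst r) < fst p) /\
  (if be then snd p < snd (snd r) else fst (snd r) < snd p).
Definition InQ (rs : list ((R*R)*(R*R))) p al be :=
  exists r, In r rs /\ in_rect r p /\ cone al be r p.
Definition dir (al : bool) (u v : R) := if al then u <= v else v <= u.
Definition sdir (al : bool) (u v : R) := if al then u < v else v < u.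

Lemma C1 P rs (HP : forall p, P p <-> exists r, In r rs /\ in_rect r p) p e :
  (forall r, In r rs -> sepr e p r) -> forall al be, InQ rs p al be ->
  forall q, inbox e p q -> dir al (fst p) (fst q) -> dir be (snd p) (snd q) -> P q.
Proof.
  intros Hs al be [r [Hr [Hin Hco]]] q [Bx By] Dx Dy.
  apply HP; exists r; split; auto.
  specialize (Hs r Hr). destruct r as [[a b] [c d]]; unfold sepr, in_rect, cone, dir in *; simpl in *.
  destruct Hs as [Sa [Sb [Sc Sd]]]. dabs.
  destruct Hco as [Cx Cy]; destruct Hin as [[H1 H2] [H3 H4]].
  destruct al; [destruct (Rabs_ge_cases _ _ (Sb ltac:(intro; lra))) | destruct (Rabs_ge_cases _ _ (Sa ltac:(intro; lra)))];
  (destruct be; [destruct (Rabs_ge_cases _ _ (Sd ltac:(intro; lra))) | destruct (Rabs_ge_cases _ _ (Sc ltac:(intro; lra)))]);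
  split; split; lra.
Qed.

Lemma C2 P rs (HP : forall p, P p <-> exists r, In r rs /\ in_rect r p) p e :
  (forall r, In r rs -> sepr e p r) -> forall al be, ~ InQ rs p al be ->
  forall q, inbox e p q -> sdir al (fst p) (fst q) -> sdir be (snd p) (snd q) -> ~ P q.
Proof.
  intros Hs al be Hn q Hb Dx Dy Pq. apply Hn.
  apply HP in Pq. destruct Pq as [r [Hr Hq]].
  exists r; split; auto.
  assert (Hp : in_rect r p) by (eapply box_rect; eauto).
  split; auto.
  destruct r as [[a b] [c d]]; unfold in_rect, cone, sdir in *; simpl in *.
  destruct al, be; lra.
Qed.

Lemma C3 rs (Hrs : forall r, In r rs -> fst (fst r) < snd (fst r) /\ fst (snd r) < snd (snd r)) p r :
  In r rs -> in_rect r p -> exists al be, InQ rs p al be.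
Proof.
  intros Hr Hp. destruct (Hrs r Hr) as [Hab Hcd].
  exists (if Rlt_dec (fst p) (snd (fst r)) then true else false).
  exists (if Rlt_dec (snd p) (snd (snd r)) then true else false).
  exists r; split; [auto| split; [auto|]].
  unfold cone. destruct r as [[a b] [c d]]; unfold in_rect in Hp; simpl in *.
  split; destruct Rlt_dec; lra.
Qed.

Lemma C4 P rs (HP : forall p, P p <-> exists r, In r rs /\ in_rect r p) p e :
  0 < e -> (forall r, In r rs -> sepr e p r) -> (forall al be, InQ rs p al be) -> interiorP P p.
Proof.
  intros He Hs Hall. exists e; split; auto. intros q H1 H2.
  apply (C1 P rs HP p e Hs (if Rle_dec (fst p) (fst q) then true else false)
          (if Rle_dec (snd p) (snd q) then true else false)); auto.
  - split; auto.
  - unfold dir; destruct Rle_dec; lra.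
  - unfold dir; destruct Rle_dec; lra.
Qed.

Lemma G3 P rs (Hrs : forall r, In r rs -> fst (fst r) < snd (fst r) /\ fst (snd r) < snd (snd r))
  (HP : forall p, P p <-> exists r, In r rs /\ in_rect r p) p :
  boundaryP P p -> on_vside P p \/ on_hside P p.
Proof.
  intros [Hcl Hni].
  assert (Pp : P p) by (eapply rp_closed; eauto).
  destruct (sep_ex rs p) as [e [He Hs]].
  assert (Hex : exists al be, InQ rs p al be /\
            (~ InQ rs p (negb al) be \/ ~ InQ rs p al (negb be))).
  { apply HP in Pp. destruct Pp as [r [Hr Hin]].
    destruct (C3 rs Hrs p r Hr Hin) as [al0 [be0 H0]].
    apply NNPP; intro Hno. apply Hni. apply (C4 P rs HP p e He Hs).
    assert (Hs2 : forall al be, InQ rs p al be -> InQ rs p (negb al) be /\ InQ rs p al (negb be)).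
    { intros al be Hq. split; apply NNPP; intro Hn; apply Hno; exists al, be; split; auto. }
    intros al be.
    destruct (Hs2 _ _ H0) as [A1 A2]. destruct (Hs2 _ _ A1) as [_ A3].
    destruct al, be, al0, be0; simpl in *; auto. }
  destruct Hex as [al [be [Hq [Hn|Hn]]]].
  - left.
    exists (if be then snd p else snd p - e/2), (if be then snd p + e/2 else snd p).
    split; [destruct be; lra|]. split; [destruct be; lra|].
    intros t Ht. split.
    + intros eps Heps. exists (fst p, t). split.
      * apply (C1 P rs HP p e Hs al be Hq).
        -- split; simpl; apply Rabs_lt_intro; destruct be; lra.
        -- unfold dir; destruct al; simpl; lra.
        -- unfold dir; destruct be; simpl; lra.
      * simpl; split; apply Rabs_lt_intro; lra.
    + intros [eps [Heps Hint]].
      assert (Hm1 : Rmin eps e <= eps) by apply Rmin_l.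
      assert (Hm2 : Rmin eps e <= e) by apply Rmin_r.
      assert (Hm3 : 0 < Rmin eps e) by (apply Rmin_glb_lt; auto).
      apply (C2 P rs HP p e Hs (negb al) be Hn
        ((if al then fst p - Rmin eps e / 4 else fst p + Rmin eps e / 4),
         (if be then t + Rmin eps e / 4 else t - Rmin eps e / 4))).
      * split; simpl; apply Rabs_lt_intro; destruct al, be; lra.
      * unfold sdir; destruct al; simpl; lra.
      * unfold sdir; destruct be; simpl; lra.
      * apply Hint; simpl; apply Rabs_lt_intro; destruct al, be; lra.
  - right.
    exists (if al then fst p else fst p - e/2), (if al then fst p + e/2 else fst p).
    split; [destruct al; lra|]. split; [destruct al; lra|].
    intros t Ht. split.
    + intros eps Heps. exists (t, snd p). split.
      * apply (C1 P rs HP p e Hs al be Hq).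
        -- split; simpl; apply Rabs_lt_intro; destruct al; lra.
        -- unfold dir; destruct al; simpl; lra.
        -- unfold dir; destruct be; simpl; lra.
      * simpl; split; apply Rabs_lt_intro; lra.
    + intros [eps [Heps Hint]].
      assert (Hm1 : Rmin eps e <= eps) by apply Rmin_l.
      assert (Hm2 : Rmin eps e <= e) by apply Rmin_r.
      assert (Hm3 : 0 < Rmin eps e) by (apply Rmin_glb_lt; auto).
      apply (C2 P rs HP p e Hs al (negb be) Hn
        ((if al then t + Rmin eps e / 4 else t - Rmin eps e / 4),
         (if be then snd p - Rmin eps e / 4 else snd p + Rmin eps e / 4))).
      * split; simpl; apply Rabs_lt_intro; destruct al, be; lra.
      * unfold sdir; destruct al; simpl; lra.
      * unfold sdir; destruct be; simpl; lra.
      * apply Hint; simpl; apply Rabs_lt_intro; destruct al, be; lra.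
Qed.

Lemma avoid (l : list R) : forall c d, c < d -> exists t, c < t < d /\ ~ In t l.
Proof.
  induction l as [|v l IH]; intros c d Hcd.
  - exists ((c+d)/2); split; [lra| intros []].
  - destruct (Rle_dec v ((c+d)/2)) as [Hv|Hv].
    + destruct (IH ((c+d)/2) d ltac:(lra)) as [t [Ht Hn]]. exists t; split; [lra|].
      intros [E|H]; [subst; lra|auto].
    + destruct (IH c ((c+d)/2) ltac:(lra)) as [t [Ht Hn]]. exists t; split; [lra|].
      intros [E|H]; [subst; lra|auto].
Qed.

Lemma fin_core P rs (HP : forall p, P p <-> exists r, In r rs /\ in_rect r p) x t :
  ~ In x (map (fun r => fst (fst r)) rs ++ map (fun r => snd (fst r)) rs) ->
  ~ In t (map (fun r => fst (snd r)) rs ++ map (fun r => snd (snd r)) rs) ->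
  boundaryP P (x, t) -> False.
Proof.
  intros Hnx Hnt [Hcl Hni].
  assert (Pp : P (x,t)) by (eapply rp_closed; eauto).
  apply HP in Pp; destruct Pp as [r [Hr Hin]].
  apply Hni.
  assert (Ha : fst (fst r) <> x) by (intro E; apply Hnx; apply in_or_app; left; rewrite <- E; apply (in_map (fun r => fst (fst r))); auto).
  assert (Hb : snd (fst r) <> x) by (intro E; apply Hnx; apply in_or_app; right; rewrite <- E; apply (in_map (fun r => snd (fst r))); auto).
  assert (Hc : fst (snd r) <> t) by (intro E; apply Hnt; apply in_or_app; left; rewrite <- E; apply (in_map (fun r => fst (snd r))); auto).
  assert (Hd : snd (snd r) <> t) by (intro E; apply Hnt; apply in_or_app; right; rewrite <- E; apply (in_map (fun r => snd (snd r))); auto).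
  destruct r as [[a b] [c' d']]; unfold in_rect in Hin; simpl in *.
  assert (a < x) by (destruct Hin as [[K1 _] _]; destruct K1; [auto|congruence]).
  assert (x < b) by (destruct Hin as [[_ K1] _]; destruct K1; [auto|congruence]).
  assert (c' < t) by (destruct Hin as [_ [K1 _]]; destruct K1; [auto|congruence]).
  assert (t < d') by (destruct Hin as [_ [_ K1]]; destruct K1; [auto|congruence]).
  destruct (Rmin4 (x - a) (b - x) (t - c') (d' - t)) as [A1 [A2 [A3 A4]]].
  exists (Rmin (Rmin (x - a) (b - x)) (Rmin (t - c') (d' - t))). split.
  - repeat apply Rmin_glb_lt; lra.
  - intros q Q1 Q2. simpl in *. dabs. apply HP. exists ((a,b),(c',d')); split; auto.
    unfold in_rect; simpl; lra.
Qed.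

Lemma vside_fin P rs (HP : forall p, P p <-> exists r, In r rs /\ in_rect r p) x :
  vside_x P x -> In x (map (fun r => fst (fst r)) rs ++ map (fun r => snd (fst r)) rs).
Proof.
  intros [c [d [Hcd Hb]]].
  apply NNPP; intro Hnx.
  destruct (avoid (map (fun r => fst (snd r)) rs ++ map (fun r => snd (snd r)) rs) c d Hcd) as [t [Ht Hnt]].
  exact (fin_core P rs HP x t Hnx Hnt (Hb t ltac:(lra))).
Qed.

Lemma hside_fin P rs (HP : forall p, P p <-> exists r, In r rs /\ in_rect r p) y :
  hside_y P y -> In y (map (fun r => fst (snd r)) rs ++ map (fun r => snd (snd r)) rs).
Proof.
  intros [c [d [Hcd Hb]]].
  apply NNPP; intro Hny.
  destruct (avoid (map (fun r => fst (fst r)) rs ++ map (fun r => snd (fst r)) rs) c d Hcd) as [t [Ht Hnt]].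
  exact (fin_core P rs HP t y Hnt Hny (Hb t ltac:(lra))).
Qed.

Lemma int_P P p : interiorP P p -> P p.
Proof. intros [e [He H]]. apply H; apply Rabs_lt_intro; lra. Qed.


Lemma right_side P rs (Hrs : forall r, In r rs -> fst (fst r) < snd (fst r) /\ fst (snd r) < snd (snd r))
  (HP : forall p, P p <-> exists r, In r rs /\ in_rect r p) z :
  (exists y, interiorP P (z,y)) -> exists w, z <= w /\ vside_x P w.
Proof.
  intros [y Hi]. apply int_P in Hi.
  apply HP in Hi; destruct Hi as [r0 [Hr0 Hin0]].
  destruct (Lmax rs (fun r => snd (fst r)) r0 Hr0) as [rm [Hrm Hmax]].
  exists (snd (fst rm)). split.
  - specialize (Hmax r0 Hr0). unfold in_rect in Hin0; simpl in *. lra.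
  - destruct (Hrs rm Hrm) as [Hab Hcd].
    exists (fst (snd rm)), (snd (snd rm)). split; auto.
    intros t Ht. split.
    + intros eps Heps. exists (snd (fst rm), t). split.
      * apply HP. exists rm; split; auto. unfold in_rect; simpl; lra.
      * simpl; split; apply Rabs_lt_intro; lra.
    + intros [eps [Heps H]].
      assert (Pq : P (snd (fst rm) + eps/2, t)) by (apply H; simpl; apply Rabs_lt_intro; lra).
      apply HP in Pq. destruct Pq as [r [Hr Hq]]. specialize (Hmax r Hr). unfold in_rect in Hq; simpl in *. lra.
Qed.

Lemma left_side P rs (Hrs : forall r, In r rs -> fst (fst r) < snd (fst r) /\ fst (snd r) < snd (snd r))
  (HP : forall p, P p <-> exists r, In r rs /\ in_rect r p) z :
  (exists y, interiorP P (z,y)) -> exists w, w <= z /\ vside_x P w.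
Proof.
  intros [y Hi]. apply int_P in Hi.
  apply HP in Hi; destruct Hi as [r0 [Hr0 Hin0]].
  destruct (Lmax rs (fun r => - fst (fst r)) r0 Hr0) as [rm [Hrm Hmax]].
  exists (fst (fst rm)). split.
  - specialize (Hmax r0 Hr0). unfold in_rect in Hin0; simpl in *. lra.
  - destruct (Hrs rm Hrm) as [Hab Hcd].
    exists (fst (snd rm)), (snd (snd rm)). split; auto.
    intros t Ht. split.
    + intros eps Heps. exists (fst (fst rm), t). split.
      * apply HP. exists rm; split; auto. unfold in_rect; simpl; lra.
      * simpl; split; apply Rabs_lt_intro; lra.
    + intros [eps [Heps H]].
      assert (Pq : P (fst (fst rm) - eps/2, t)) by (apply H; simpl; apply Rabs_lt_intro; lra).
      apply HP in Pq. destruct Pq as [r [Hr Hq]]. specialize (Hmax r Hr). unfold in_rect in Hq; simpl in *. lra.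
Qed.

Lemma top_side P rs (Hrs : forall r, In r rs -> fst (fst r) < snd (fst r) /\ fst (snd r) < snd (snd r))
  (HP : forall p, P p <-> exists r, In r rs /\ in_rect r p) z :
  (exists x, interiorP P (x,z)) -> exists w, z <= w /\ hside_y P w.
Proof.
  intros [x Hi]. apply int_P in Hi.
  apply HP in Hi; destruct Hi as [r0 [Hr0 Hin0]].
  destruct (Lmax rs (fun r => snd (snd r)) r0 Hr0) as [rm [Hrm Hmax]].
  exists (snd (snd rm)). split.
  - specialize (Hmax r0 Hr0). unfold in_rect in Hin0; simpl in *. lra.
  - destruct (Hrs rm Hrm) as [Hab Hcd].
    exists (fst (fst rm)), (snd (fst rm)). split; auto.
    intros t Ht. split.
    + intros eps Heps. exists (t, snd (snd rm)). split.
      * apply HP. exists rm; split; auto. unfold in_rect; simpl; lra.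
      * simpl; split; apply Rabs_lt_intro; lra.
    + intros [eps [Heps H]].
      assert (Pq : P (t, snd (snd rm) + eps/2)) by (apply H; simpl; apply Rabs_lt_intro; lra).
      apply HP in Pq. destruct Pq as [r [Hr Hq]]. specialize (Hmax r Hr). unfold in_rect in Hq; simpl in *. lra.
Qed.

Lemma bot_side P rs (Hrs : forall r, In r rs -> fst (fst r) < snd (fst r) /\ fst (snd r) < snd (snd r))
  (HP : forall p, P p <-> exists r, In r rs /\ in_rect r p) z :
  (exists x, interiorP P (x,z)) -> exists w, w <= z /\ hside_y P w.
Proof.
  intros [x Hi]. apply int_P in Hi.
  apply HP in Hi; destruct Hi as [r0 [Hr0 Hin0]].
  destruct (Lmax rs (fun r => - fst (snd r)) r0 Hr0) as [rm [Hrm Hmax]].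
  exists (fst (snd rm)). split.
  - specialize (Hmax r0 Hr0). unfold in_rect in Hin0; simpl in *. lra.
  - destruct (Hrs rm Hrm) as [Hab Hcd].
    exists (fst (fst rm)), (snd (fst rm)). split; auto.
    intros t Ht. split.
    + intros eps Heps. exists (t, fst (snd rm)). split.
      * apply HP. exists rm; split; auto. unfold in_rect; simpl; lra.
      * simpl; split; apply Rabs_lt_intro; lra.
    + intros [eps [Heps H]].
      assert (Pq : P (t, fst (snd rm) - eps/2)) by (apply H; simpl; apply Rabs_lt_intro; lra).
      apply HP in Pq. destruct Pq as [r [Hr Hq]]. specialize (Hmax r Hr). unfold in_rect in Hq; simpl in *. lra.
Qed.

Lemma mk_list (L : list R) : forall Q : R -> Prop,
  (forall x, Q x -> In x L) -> exists l, NoDup l /\ forall x, In x l <-> Q x.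
Proof.
  induction L as [|v L IH]; intros Q HQ.
  - exists nil; split; [constructor|]. intros x; split; [intros []| intros Hx; destruct (HQ x Hx)].
  - destruct (IH (fun x => Q x /\ x <> v)) as [l [Hnd Hl]].
    { intros x [Hx Hxv]. destruct (HQ x Hx) as [E|H]; [congruence|auto]. }
    destruct (classic (Q v)) as [Qv|Qv].
    + exists (v :: l); split.
      * constructor; auto. intro Hin. apply Hl in Hin. tauto.
      * intros x; split.
        -- intros [E|Hx]; [subst; auto|]. apply Hl in Hx; tauto.
        -- intros Hx. destruct (Req_EM_T x v) as [E|Hne]; [left; auto| right; apply Hl; auto].
    + exists l; split; auto. intros x; split.
      * intros Hx; apply Hl in Hx; tauto.
      * intros Hx; apply Hl; split; auto. intros E; subst; contradiction.
Qed.

Fixpoint tsum (t : nat -> R) (n : nat) : R :=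
  match n with O => 0 | S n' => tsum t n' + t n' end.
Definition esum (E : list (Z*R)) : R :=
  fold_right Rplus 0 (map (fun ca => IZR (fst ca) * snd ca) E).
Lemma esum_cons ca E : esum (ca :: E) = IZR (fst ca) * snd ca + esum E.
Proof. reflexivity. Qed.
Definition zsgn (s : R) : Z := if Req_EM_T s 1 then 1%Z else (-1)%Z.
Lemma zsgn_ok s : s = 1 \/ s = -1 -> IZR (zsgn s) = s.
Proof. unfold zsgn; destruct (Req_EM_T s 1); intros [E|E]; subst; try lra; reflexivity. Qed.
Lemma zsgn_1 : zsgn 1 = 1%Z.
Proof. unfold zsgn; destruct (Req_EM_T 1 1); [auto|lra]. Qed.
Lemma zsgn_m1 : zsgn (-1) = (-1)%Z.
Proof. unfold zsgn; destruct (Req_EM_T (-1) 1); [lra|auto]. Qed.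

Definition evgood (V Int : R -> Prop) (ca : Z*R) : Prop :=
  V (snd ca) /\ (((0 < fst ca)%Z /\ exists u, 0 < u /\ Int (snd ca - u)) \/
                 ((fst ca < 0)%Z /\ exists u, 0 < u /\ Int (snd ca + u))).

Lemma start_good V Int x0 s t c : V x0 -> (s = 1 \/ s = -1) -> 0 < t ->
  (forall u, 0 < u < t -> Int (x0 + u * s)) -> c = (- zsgn s)%Z -> evgood V Int (c, x0).
Proof.
  intros V0 Hs Ht Hu Hc. split; [exact V0|]. simpl.
  destruct Hs as [E|E]; subst s; [rewrite zsgn_1 in Hc|rewrite zsgn_m1 in Hc]; subst c.
  - right; split; [lia|]. exists (t/2); split; [lra|].
    replace (x0 + t/2) with (x0 + t/2 * 1) by lra. apply Hu; lra.
  - left; split; [lia|]. exists (t/2); split; [lra|].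
    replace (x0 - t/2) with (x0 + t/2 * -1) by lra. apply Hu; lra.
Qed.

Lemma end_good V Int x0 s t m c : V (x0 + t * s) -> (s = 1 \/ s = -1) -> 0 < t ->
  (forall u, 0 < u < t -> Int (x0 + u * s)) -> (0 < m)%Z -> c = (m * zsgn s)%Z ->
  evgood V Int (c, x0 + t * s).
Proof.
  intros V0 Hs Ht Hu Hm Hc. split; [exact V0|]. simpl.
  destruct Hs as [E|E]; subst s; [rewrite zsgn_1 in Hc|rewrite zsgn_m1 in Hc]; subst c.
  - left; split; [lia|]. exists (t/2); split; [lra|].
    replace (x0 + t * 1 - t/2) with (x0 + t/2 * 1) by lra. apply Hu; lra.
  - right; split; [lia|]. exists (t/2); split; [lra|].
    replace (x0 + t * -1 + t/2) with (x0 + t/2 * -1) by lra. apply Hu; lra.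
Qed.

Lemma seq_events V Int k (x s t : nat -> R) :
  (0 < k)%nat -> V (x O) -> V (x k) ->
  (forall i, (i < k)%nat -> (s i = 1 \/ s i = -1) /\ 0 < t i /\ x (S i) = x i + t i * s i /\
      forall u, 0 < u < t i -> Int (x i + u * s i)) ->
  (forall i, (0 < i < k)%nat -> (V (x i) /\ s i = - s (pred i)) \/ s i = s (pred i)) ->
  exists E, (forall ca, In ca E -> evgood V Int ca) /\ esum E = tsum t k.
Proof.
  intros Hk V0 Vk Hl Hm.
  assert (Inv : forall j, (1 <= j <= k)%nat -> exists E, (forall ca, In ca E -> evgood V Int ca) /\
            esum E + s (pred j) * x j = tsum t j).
  { induction j as [|j IH]; intros Hj; [lia|].
    destruct j as [|j].
    - destruct (Hl O Hk) as [Hs [Ht [Hx Hu]]].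
      exists (((- zsgn (s O))%Z, x O) :: nil). split.
      + intros ca [E|[]]; subst ca. eapply start_good; eauto.
      + rewrite esum_cons. cbn [fst snd pred tsum esum map fold_right].
        rewrite opp_IZR, zsgn_ok by auto. rewrite Hx.
        destruct Hs as [E|E]; rewrite E; ring.
    - destruct (IH ltac:(lia)) as [E [HE Heq]]. cbn [pred tsum] in Heq.
      destruct (Hl j ltac:(lia)) as [Hsj [Htj [Hxj Huj]]].
      destruct (Hl (S j) ltac:(lia)) as [Hs [Ht [Hx Hu]]].
      destruct (Hm (S j) ltac:(lia)) as [[Vj Ef]|Ef]; cbn [pred] in Ef.
      + exists (((2 * zsgn (s j))%Z, x (S j)) :: E). split.
        * intros ca [Eca|Hca]; [subst ca|auto]. rewrite Hxj.
          eapply end_good; eauto; [rewrite <- Hxj; auto | lia].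
        * rewrite esum_cons. cbn [fst snd pred tsum].
          rewrite mult_IZR, zsgn_ok by auto. rewrite Hx, Ef.
          destruct Hsj as [E1|E1]; rewrite E1 in *; lra.
      + exists E. split; auto. cbn [pred tsum].
        rewrite Hx, Ef.
        destruct Hsj as [E1|E1]; rewrite E1 in *; lra. }
  destruct k as [|k']; [lia|].
  destruct (Inv (S k') ltac:(lia)) as [E [HE Heq]]. cbn [pred] in Heq.
  destruct (Hl k' ltac:(lia)) as [Hs [Ht [Hx Hu]]].
  exists ((zsgn (s k'), x (S k')) :: E). split.
  - intros ca [Eca|Hca]; [subst ca|auto]. rewrite Hx.
    apply (end_good V Int (x k') (s k') (t k') 1%Z); [rewrite <- Hx; auto|auto|auto|auto|lia|lia].
  - rewrite esum_cons; cbn [fst snd]. rewrite zsgn_ok by auto. lra.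
Qed.

Lemma tsum_pos t k : (0 < k)%nat -> (forall i, (i < k)%nat -> 0 < t i) -> 0 < tsum t k.
Proof.
  induction k as [|k IH]; intros Hk Ht; [lia|].
  destruct k as [|k].
  - simpl. specialize (Ht O ltac:(lia)). lra.
  - cbn [tsum]. cbn [tsum] in IH. assert (H1 := Ht (S k) ltac:(lia)).
    assert (H2 : 0 < tsum t k + t k) by (apply IH; [lia| intros i Hi; apply Ht; lia]). lra.
Qed.

Definition delta (a x : R) : Z :=
  ((if Req_EM_T a x then 1 else 0) - (if Req_EM_T a (- x) then 1 else 0))%Z.
Fixpoint nE (E : list (Z*R)) (x : R) : Z :=
  match E with nil => 0%Z | ca :: E' => (fst ca * delta (snd ca) x + nE E' x)%Z end.

Lemma zsum_nil f : zsum f nil = 0.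
Proof. reflexivity. Qed.
Lemma zsum_cons f v l : zsum f (v :: l) = IZR (f v) * v + zsum f l.
Proof. reflexivity. Qed.

Lemma zsum_zero f l : (forall x, In x l -> f x = 0%Z) -> zsum f l = 0.
Proof.
  induction l as [|v l IH]; intros H; [reflexivity|].
  rewrite zsum_cons, IH by (intros; apply H; simpl; auto). rewrite (H v) by (left; auto). simpl; ring.
Qed.

Lemma zsum_nE_cons ca E l : zsum (nE (ca :: E)) l = IZR (fst ca) * zsum (delta (snd ca)) l + zsum (nE E) l.
Proof.
  induction l as [|v l IH]; [rewrite !zsum_nil; ring|].
  rewrite !zsum_cons, IH. cbn [nE]. rewrite plus_IZR, mult_IZR. ring.
Qed.

Lemma zsum_nE_nil l : zsum (nE nil) l = 0.
Proof. apply zsum_zero; reflexivity. Qed.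

Definition ind1 a := fun x => if Req_EM_T a x then 1%Z else 0%Z.
Definition ind2 a := fun x => if Req_EM_T a (- x) then 1%Z else 0%Z.

Lemma zsum_delta_split a l : zsum (delta a) l = zsum (ind1 a) l - zsum (ind2 a) l.
Proof.
  induction l as [|v l IH]; [rewrite !zsum_nil; ring|].
  rewrite !zsum_cons, IH. unfold delta, ind1, ind2. rewrite minus_IZR. ring.
Qed.

Lemma ind1_nin a l : ~ In a l -> zsum (ind1 a) l = 0.
Proof.
  induction l as [|v l IH]; intros H; [reflexivity|].
  rewrite zsum_cons, IH by (intro; apply H; right; auto). unfold ind1.
  destruct (Req_EM_T a v); [exfalso; apply H; left; auto|]. simpl; ring.
Qed.

Lemma ind1_in a l : NoDup l -> In a l -> zsum (ind1 a) l = a.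
Proof.
  induction l as [|v l IH]; intros Hn H; [destruct H|].
  apply NoDup_cons_iff in Hn; destruct Hn as [Hv Hn].
  rewrite zsum_cons. unfold ind1 at 1. destruct (Req_EM_T a v) as [E|E].
  - subst. rewrite ind1_nin by auto. simpl; ring.
  - destruct H as [H|H]; [congruence|]. rewrite IH by auto. simpl; ring.
Qed.

Lemma ind2_nin a l : ~ In (- a) l -> zsum (ind2 a) l = 0.
Proof.
  induction l as [|v l IH]; intros H; [reflexivity|].
  rewrite zsum_cons, IH by (intro; apply H; right; auto). unfold ind2.
  destruct (Req_EM_T a (- v)); [exfalso; apply H; left; lra|]. simpl; ring.
Qed.

Lemma ind2_in a l : NoDup l -> In (- a) l -> zsum (ind2 a) l = - a.
Proof.
  induction l as [|v l IH]; intros Hn H; [destruct H|].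
  apply NoDup_cons_iff in Hn; destruct Hn as [Hv Hn].
  rewrite zsum_cons. unfold ind2 at 1. destruct (Req_EM_T a (- v)) as [E|E].
  - rewrite ind2_nin. simpl; lra. replace (- a) with v by lra. auto.
  - destruct H as [H|H]; [exfalso; apply E; lra|]. rewrite IH by auto. simpl; ring.
Qed.

Lemma zsum_delta a l : NoDup l -> (forall x, In x l -> 0 < x) ->
  (0 < a -> In a l) -> (a < 0 -> In (- a) l) -> zsum (delta a) l = a.
Proof.
  intros Hn Hp H1 H2. rewrite zsum_delta_split.
  destruct (Rtotal_order a 0) as [Ha|[Ha|Ha]].
  - rewrite ind1_nin, ind2_in; auto. ring. intro Hi; specialize (Hp a Hi); lra.
  - rewrite ind1_nin, ind2_nin. lra.
    intro Hi; specialize (Hp _ Hi); lra. intro Hi; specialize (Hp a Hi); lra.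
  - rewrite ind1_in, ind2_nin; auto. ring. intro Hi; specialize (Hp _ Hi); lra.
Qed.

Lemma zsum_nE E l : NoDup l -> (forall x, In x l -> 0 < x) ->
  (forall ca, In ca E -> (0 < snd ca -> In (snd ca) l) /\ (snd ca < 0 -> In (- snd ca) l)) ->
  zsum (nE E) l = esum E.
Proof.
  intros Hn Hp. induction E as [|ca E IH]; intros H.
  - apply zsum_nE_nil.
  - rewrite zsum_nE_cons, esum_cons, IH by (intros; apply H; right; auto).
    destruct (H ca ltac:(left; auto)). rewrite zsum_delta; auto.
Qed.

Lemma nE_nonneg E z : (forall ca, In ca E -> (0 <= fst ca * delta (snd ca) z)%Z) -> (0 <= nE E z)%Z.
Proof.
  induction E as [|ca E IH]; intros H; simpl; [lia|].
  assert (A := H ca ltac:(left; auto)). assert (B : (0 <= nE E z)%Z) by (apply IH; intros; apply H; right; auto).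
  lia.
Qed.

Lemma term_xp V Int xp ca :
  is_max0 (fun x => 0 <= x /\ V x) xp -> ~ (exists x', x' < 0 /\ V x' /\ xp = - x') ->
  (forall z, Int z -> exists w, z <= w /\ V w) -> evgood V Int ca ->
  (0 <= fst ca * delta (snd ca) xp)%Z.
Proof.
  intros Hm Hn HR [Va Hs]. destruct ca as [c a]; simpl in *.
  assert (Hxp0 : 0 <= xp) by (destruct Hm as [[[H _] _]|[_ E]]; lra).
  unfold delta. destruct (Req_EM_T a xp) as [E1|E1]; destruct (Req_EM_T a (-xp)) as [E2|E2].
  - lia.
  - subst a. destruct Hs as [[Hc _]|[Hc [u [Hu HI]]]]; [lia|]. exfalso.
    destruct (HR _ HI) as [w [Hw Vw]].
    destruct Hm as [[_ Hmax]|[Hno _]].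
    + specialize (Hmax w ltac:(split; [lra|auto])). lra.
    + apply (Hno w). split; [lra|auto].
  - exfalso. apply Hn. exists a.
    assert (a < 0). { destruct (Rlt_or_le a 0) as [h|h]; auto. exfalso; apply E1; lra. }
    split; [auto|split; [auto|lra]].
  - lia.
Qed.

Lemma term_xm V Int xm ca :
  is_max0 (fun x => exists x', x' < 0 /\ V x' /\ x = - x') xm -> ~ (0 <= xm /\ V xm) ->
  (forall z, Int z -> exists w, w <= z /\ V w) -> evgood V Int ca ->
  (0 <= fst ca * delta (snd ca) xm)%Z.
Proof.
  intros Hm Hn HL [Va Hs]. destruct ca as [c a]; simpl in *.
  assert (Hxm0 : 0 <= xm) by (destruct Hm as [[[x' [Hx' [_ E]]] _]|[_ E]]; lra).
  unfold delta. destruct (Req_EM_T a xm) as [E1|E1]; destruct (Req_EM_T a (-xm)) as [E2|E2].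
  - lia.
  - exfalso. apply Hn. subst a. split; auto.
  - destruct Hs as [[Hc [u [Hu HI]]]|[Hc _]]; [|lia]. exfalso.
    destruct (HL _ HI) as [w [Hw Vw]].
    destruct Hm as [[_ Hmax]|[Hno _]].
    + specialize (Hmax (- w) ltac:(exists w; split; [lra|split; [auto|ring]])). lra.
    + apply (Hno (- w)). exists w; split; [lra|split; [auto|ring]].
  - lia.
Qed.

Lemma glue V Int (lx : list R) (E : list (Z*R)) xp xm :
  NoDup lx ->
  (forall x, In x lx <-> ((0 <= x /\ V x) \/ (exists x', x' < 0 /\ V x' /\ x = - x')) /\ x <> 0) ->
  is_max0 (fun x => 0 <= x /\ V x) xp ->
  is_max0 (fun x => exists x', x' < 0 /\ V x' /\ x = - x') xm ->
  ~ (exists x', x' < 0 /\ V x' /\ xp = - x') -> ~ (0 <= xm /\ V xm) ->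
  (forall z, Int z -> exists w, z <= w /\ V w) -> (forall z, Int z -> exists w, w <= z /\ V w) ->
  (forall ca, In ca E -> evgood V Int ca) ->
  zsum (nE E) lx = esum E /\ (0 <= nE E xp)%Z /\ (0 <= nE E xm)%Z.
Proof.
  intros Hnd Hsp Hxp Hxm Nxp Nxm HR HL HE. split; [|split].
  - apply zsum_nE; auto.
    + intros x Hx. apply Hsp in Hx. destruct Hx as [[[H1 _]|[x' [H1 [_ H2]]]] H3].
      * destruct H1; [auto|congruence].
      * lra.
    + intros ca Hca. destruct (HE ca Hca) as [Va _]. split; intros Ha; apply Hsp.
      * split; [left; split; [lra|auto]|lra].
      * split; [right; exists (snd ca); split; [auto|split; [auto|ring]]|lra].
  - apply nE_nonneg. intros ca Hca. eapply term_xp; eauto.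
  - apply nE_nonneg. intros ca Hca. eapply term_xm; eauto.
Qed.

Lemma onv P p : on_vside P p -> vside_x P (fst p).
Proof. intros [c [d [Hcd [_ H]]]]. exists c, d; split; auto. Qed.
Lemma onh P p : on_hside P p -> hside_y P (snd p).
Proof. intros [c [d [Hcd [_ H]]]]. exists c, d; split; auto. Qed.

Theorem theorem4p1 (P : pt -> Prop) (xp xm yp ym : R) :
  is_RP P ->
  is_max0 (XPp P) xp -> is_max0 (XPm P) xm ->
  is_max0 (YPp P) yp -> is_max0 (YPm P) ym ->
  ~ XPm P xp -> ~ XPp P xm -> ~ YPm P yp -> ~ YPp P ym ->
  (forall (lx ly : list R) (n m : R -> Z),
     NoDup lx -> (forall x, In x lx <-> XP P x /\ x <> 0) ->
     NoDup ly -> (forall y, In y ly <-> YP P y /\ y <> 0) ->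
     ((exists x, In x lx /\ n x <> 0%Z) \/ (exists y, In y ly /\ m y <> 0%Z)) ->
     (xp <> 0 -> xm <> 0 -> (0 <= n xp * n xm)%Z) ->
     (yp <> 0 -> ym <> 0 -> (0 <= m yp * m ym)%Z) ->
     zsum n lx - zsum m ly <> 0) ->
  ~ resonant P.
Proof.
  intros HRP Hxp Hxm Hyp Hym Nxp Nxm Nyp Nym H Hres.
  destruct HRP as [rs [Hne [Hrs HP]]].
  destruct Hres as [k [p [sx [sy [Hk [C0 [Ck [Hleg Hmid]]]]]]]].
  set (t := fun i => (fst (p (S i)) - fst (p i)) * sx i).
  assert (Hleg' : forall i, (i < k)%nat -> (sx i = 1 \/ sx i = -1) /\ (sy i = 1 \/ sy i = -1) /\
     0 < t i /\ fst (p (S i)) = fst (p i) + t i * sx i /\ snd (p (S i)) = snd (p i) + t i * sy i /\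
     forall u, 0 < u < t i -> interiorP P (fst (p i) + u * sx i, snd (p i) + u * sy i)).
  { intros i Hi. destruct (Hleg i Hi) as [Hsx [Hsy [t0 [Ht0 [Hp Hu]]]]].
    assert (Et : t i = t0).
    { unfold t; rewrite Hp; simpl. destruct Hsx as [E|E]; rewrite E; ring. }
    rewrite Et, Hp; simpl.
    split; [auto|split; [auto|split; [auto|split; [auto|split; [auto|exact Hu]]]]]. }
  assert (Tpos : 0 < tsum t k).
  { apply tsum_pos; auto. intros i Hi; apply (Hleg' i Hi). }
  destruct (mk_list ((map (fun r => fst (fst r)) rs ++ map (fun r => snd (fst r)) rs) ++
     map Ropp (map (fun r => fst (fst r)) rs ++ map (fun r => snd (fst r)) rs))
     (fun x => XP P x /\ x <> 0)) as [lx [Hndx Hlx]].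
  { intros x [[[_ Hv]|[x' [_ [Hv E]]]] _]; apply in_or_app.
    - left. eapply vside_fin; eauto.
    - right. subst x. apply in_map. eapply vside_fin; eauto. }
  destruct (mk_list ((map (fun r => fst (snd r)) rs ++ map (fun r => snd (snd r)) rs) ++
     map Ropp (map (fun r => fst (snd r)) rs ++ map (fun r => snd (snd r)) rs))
     (fun y => YP P y /\ y <> 0)) as [ly [Hndy Hly]].
  { intros x [[[_ Hv]|[x' [_ [Hv E]]]] _]; apply in_or_app.
    - left. eapply hside_fin; eauto.
    - right. subst x. apply in_map. eapply hside_fin; eauto. }
  destruct (seq_events (vside_x P) (fun z => exists y, interiorP P (z,y)) k
              (fun i => fst (p i)) sx t Hk) as [Ex [HEx SEx]].
  { apply onv; apply C0. }
  { apply onv; apply Ck. }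
  { intros i Hi. destruct (Hleg' i Hi) as [Hsx [_ [Ht [Hx [_ Hu]]]]].
    split; [auto|split; [auto|split; [auto|]]].
    intros u Hu'. exists (snd (p i) + u * sy i); apply Hu; auto. }
  { intros i Hi. destruct (Hmid i Hi) as [Hb [Hnc [Hv Hh]]].
    destruct (G3 P rs Hrs HP (p i) Hb) as [V|V].
    - left; split; [apply onv; auto | apply Hv; auto].
    - right. apply Hh; auto. }
  destruct (seq_events (hside_y P) (fun z => exists x, interiorP P (x,z)) k
              (fun i => snd (p i)) sy t Hk) as [Ey [HEy SEy]].
  { apply onh; apply C0. }
  { apply onh; apply Ck. }
  { intros i Hi. destruct (Hleg' i Hi) as [_ [Hsy [Ht [_ [Hy Hu]]]]].
    split; [auto|split; [auto|split; [auto|]]].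
    intros u Hu'. exists (fst (p i) + u * sx i); apply Hu; auto. }
  { intros i Hi. destruct (Hmid i Hi) as [Hb [Hnc [Hv Hh]]].
    destruct (G3 P rs Hrs HP (p i) Hb) as [V|V].
    - right. apply Hv; auto.
    - left; split; [apply onh; auto | apply Hh; auto]. }
  destruct (glue (vside_x P) (fun z => exists y, interiorP P (z,y)) lx Ex xp xm) as [Zx [Px Mx]];
    auto.
  { intros z Hz; eapply right_side; eauto. }
  { intros z Hz; eapply left_side; eauto. }
  destruct (glue (hside_y P) (fun z => exists x, interiorP P (x,z)) ly Ey yp ym) as [Zy [Py My]];
    auto.
  { intros z Hz; eapply top_side; eauto. }
  { intros z Hz; eapply bot_side; eauto. }
  apply (H lx ly (nE Ex) (nE Ey) Hndx Hlx Hndy Hly).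
  - left. apply NNPP; intro Hno.
    assert (zsum (nE Ex) lx = 0).
    { apply zsum_zero. intros x Hin. destruct (Z.eq_dec (nE Ex x) 0) as [e|e]; auto.
      exfalso; apply Hno; eauto. }
    lra.
  - intros; apply Z.mul_nonneg_nonneg; auto.
  - intros; apply Z.mul_nonneg_nonneg; auto.
  - rewrite Zx, Zy, SEx, SEy; ring.
Qed.
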